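(* Let $D$ be an integral domain and let $S$ be a splitting multiplicative subset of $D$ generated by prime elements. Then $D$ is a completely atomic domain (resp., a RIDF-domain, a U-FFD) if and only if $D_S$ is a completely atomic domain (resp., a RIDF-domain, a U-FFD).
   Context: A multiplicative subset $S$ of $D$ is generated by primes if $S=\{u p_1\cdots p_n: u\in U(D),\ p_i\in P,\ n\ge0\}$ for some set $P$ of prime elements of $D$. A saturated multiplicative subset $S$ of $D$ is splitting if each $x\in D$ can be written as $x=as$ with $a\in D$, $s\in S$, such that $aD\cap tD=atD$ for all $t\in S$. An atom (irreducible element) is a nonzero nonunit $a$ such that $a=bc$ implies $b$ or $c$ is a unit; a nonzero nonunit is atomic if it is a finite product of atoms. A domain is completely atomic if every nonunit divisor of an atomic element is atomic. A domain is a RIDF-domain if every atomic element has only finitely many pairwise nonassociate irreducible divisors. A domain is a U-FFD if every atomic element has only finitely many factorizations into irreducibles (up to order and associates). *)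

(* Defs.v *)
From HB Require Import structures.
From mathcomp Require Import all_boot all_order all_algebra fraction.
Set Implicit Arguments. Unset Strict Implicit. Unset Printing Implicit Defensive.
Import GRing.Theory.
Local Open Scope ring_scope.

(* Factorization notions relative to a subring A (given as a predicate) of an
   integral domain K.  For D itself we take A = wholeD (everything); for the
   localization D_S we take the subring of {fraction D} of elements a/s. *)
Section Rel.
Variables (K : idomainType) (A : K -> Prop).

Definition unitIn (u : K) : Prop := A u /\ exists v, A v /\ u * v = 1.
Definition dvdIn (a b : K) : Prop := exists c, A c /\ b = a * c.
Definition assocIn (a b : K) : Prop := exists u, unitIn u /\ b = a * u.

Definition atomIn (a : K) : Prop :=
  [/\ A a, a != 0, ~ unitIn a &
      forall b c, A b -> A c -> a = b * c -> unitIn b \/ unitIn c].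

Definition factorizationIn (x : K) (l : seq K) : Prop :=
  (forall a, a \in l -> atomIn a) /\ x = \prod_(a <- l) a.

Definition atomicIn (x : K) : Prop :=
  [/\ A x, x != 0, ~ unitIn x & exists l, factorizationIn x l].

Fixpoint Forall2P (l1 l2 : seq K) : Prop :=
  match l1, l2 with
  | [::], [::] => True
  | a :: r1, b :: r2 => assocIn a b /\ Forall2P r1 r2
  | _, _ => False
  end.

Definition fact_equivIn (l1 l2 : seq K) : Prop :=
  exists l, perm_eq l l2 /\ Forall2P l1 l.

Definition completely_atomicIn : Prop :=
  forall x d, atomicIn x -> A d -> ~ unitIn d -> dvdIn d x -> atomicIn d.

(* finitely many pairwise nonassociate irreducible divisors *)
Definition RIDFIn : Prop :=
  forall x, atomicIn x -> exists L : seq K,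
    forall a, atomIn a -> dvdIn a x -> exists2 b, b \in L & assocIn a b.

(* finitely many factorizations up to order and associates *)
Definition UFFDIn : Prop :=
  forall x, atomicIn x -> exists LL : seq (seq K),
    forall l, factorizationIn x l -> exists2 l', l' \in LL & fact_equivIn l l'.
End Rel.

Section Dom.
Variable (D : idomainType).

Definition wholeD : D -> Prop := fun _ => True.

Definition primeD (p : D) : Prop :=
  [/\ p != 0, p \notin GRing.unit &
      forall a b, dvdIn wholeD p (a * b) -> dvdIn wholeD p a \/ dvdIn wholeD p b].

Definition generated_by_primes (S : pred D) : Prop :=
  exists P : pred D, (forall p, p \in P -> primeD p) /\
    forall x, x \in S <-> exists u (l : seq D),
      [/\ u \in GRing.unit, all (fun p => p \in P) l & x = u * \prod_(p <- l) p].

Definition saturated_mult (S : pred D) : Prop :=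
  [/\ 1 \in S, forall a b, a \in S -> b \in S -> a * b \in S
    & forall a b, a * b \in S -> a \in S /\ b \in S].

Definition splitting (S : pred D) : Prop :=
  saturated_mult S /\
  forall x, exists a s, [/\ s \in S, x = a * s &
    forall t, t \in S -> forall y,
      (dvdIn wholeD a y /\ dvdIn wholeD t y) <-> dvdIn wholeD (a * t) y].

(* D_S as the subring {a/s : a in D, s in S} of the fraction field of D *)
Definition locS (S : pred D) : {fraction D} -> Prop :=
  fun z => exists a s, s \in S /\ z = FracField.tofrac a / FracField.tofrac s.
End Dom.

(* Main.v *)
Require Import Defs.
From mathcomp Require Import all_boot all_order all_algebra fraction.
From Stdlib Require Import Classical.
From mathcomp Require Import ring.
Set Implicit Arguments. Unset Strict Implicit. Unset Printing Implicit Defensive.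
Import GRing.Theory.
Local Open Scope ring_scope.

Section Gen.
Variables (K : idomainType) (A : K -> Prop).
Hypotheses (A1 : A 1) (AM : forall x y, A x -> A y -> A (x * y)).

Local Notation U := (unitIn A).
Local Notation asc := (assocIn A).
Local Notation atom := (atomIn A).

Lemma gU1 : U 1.
Proof. by split=> //; exists 1; rewrite mulr1. Qed.

Lemma gUM u v : U u -> U v -> U (u * v).
Proof.
move=> [Au [u' [Au' e1]]] [Av [v' [Av' e2]]]; split; first exact: AM.
exists (v' * u'); split; first exact: AM.
by rewrite mulrA -(mulrA u) e2 mulr1 e1.
Qed.

Lemma gUinv u : U u -> exists v, U v /\ u * v = 1.
Proof.
move=> [Au [v [Av e]]]; exists v; split=> //; split=> //.
by exists u; split=> //; rewrite mulrC.
Qed.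

Lemma gUneq0 u : U u -> u != 0.
Proof. by move=> [_ [v [_ e]]]; apply/eqP=> u0; move: e; rewrite u0 mul0r => /eqP; rewrite eq_sym oner_eq0. Qed.

Lemma gUfactor x y : A x -> A y -> U (x * y) -> U x.
Proof.
move=> Ax Ay [_ [w [Aw e]]]; split=> //; exists (y * w); split; first exact: AM.
by rewrite mulrA.
Qed.

Lemma gas_refl a : asc a a.
Proof. by exists 1; split; [exact: gU1| rewrite mulr1]. Qed.

Lemma gas_sym a b : asc a b -> asc b a.
Proof.
move=> [u [Uu ->]]; have [v [Uv e]] := gUinv Uu.
by exists v; split=> //; rewrite -mulrA e mulr1.
Qed.

Lemma gas_trans a b c : asc a b -> asc b c -> asc a c.
Proof.
move=> [u [Uu ->]] [v [Uv ->]]; exists (u * v); split; first exact: gUM.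
by rewrite mulrA.
Qed.

Lemma gas_unit a u : U u -> asc a (a * u).
Proof. by move=> Uu; exists u. Qed.

Lemma gnotU_mul x u : A x -> U u -> ~ U x -> ~ U (x * u).
Proof. by move=> Ax Uu nUx /(gUfactor Ax (proj1 Uu)). Qed.

Lemma gatom_neq0 a : atom a -> a != 0.
Proof. by case. Qed.

Lemma gatomU a u : atom a -> U u -> atom (a * u).
Proof.
move=> [Aa a0 nUa irr] Uu; have [v [Uv e]] := gUinv Uu.
split; first exact: AM (proj1 Uu).
- by rewrite mulf_neq0 // gUneq0.
- exact: gnotU_mul.
move=> b c Ab Ac e2.
have Acv : A (c * v) by apply: AM => //; case: Uv.
have : a = b * (c * v) by rewrite mulrA -e2 -mulrA e mulr1.
case/(irr _ _ Ab Acv) => [Ub | Ucv]; [by left | right].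
by have := gUM Ucv Uu; rewrite -mulrA [v * u]mulrC e mulr1.
Qed.

Lemma gprodA l : (forall y, y \in l -> A y) -> A (\prod_(y <- l) y).
Proof.
elim: l => [|y l IH] H; first by rewrite big_nil.
rewrite big_cons; apply: AM; first by apply: H; rewrite mem_head.
by apply: IH => z zl; apply: H; rewrite in_cons zl orbT.
Qed.

Lemma gprod_neq0 l : (forall y, y \in l -> atom y) -> \prod_(y <- l) y != 0.
Proof.
elim: l => [|y l IH] H; first by rewrite big_nil oner_neq0.
rewrite big_cons mulf_neq0 //; first by apply: gatom_neq0; apply: H; rewrite mem_head.
by apply: IH => z zl; apply: H; rewrite in_cons zl orbT.
Qed.

Lemma gF2P_refl l : Forall2P A l l.
Proof. by elim: l => //= a l IH; split=> //; exact: gas_refl. Qed.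

Lemma gF2P_trans l1 l2 l3 : Forall2P A l1 l2 -> Forall2P A l2 l3 -> Forall2P A l1 l3.
Proof.
elim: l1 l2 l3 => [|a l1 IH] [|b l2] [|c l3] //= [h1 h2] [h3 h4]; split.
  exact: gas_trans h3.
exact: IH h4.
Qed.

Lemma gF2P_size l1 l2 : Forall2P A l1 l2 -> size l1 = size l2.
Proof. by elim: l1 l2 => [|a l1 IH] [|b l2] //= [_ /IH ->]. Qed.

Lemma gF2P_mem l1 l2 y : Forall2P A l1 l2 -> y \in l1 -> exists2 z, z \in l2 & asc y z.
Proof.
elim: l1 l2 => [|a l1 IH] [|b l2] //= [h1 h2]; rewrite in_cons => /orP [/eqP ->|yl].
  by exists b => //; rewrite mem_head.
by have [z zl hz] := IH _ h2 yl; exists z => //; rewrite in_cons zl orbT.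
Qed.

Lemma gabsorb y u l : A y -> ~ U y -> U u -> y = \prod_(b <- l) b * u ->
  (forall b, b \in l -> atom b) ->
  exists l', factorizationIn A y l' /\ Forall2P A l l'.
Proof.
move=> Ay nUy Uu ey Hl; case: l ey Hl => [|b l] ey Hl.
  by move: nUy; rewrite ey big_nil mul1r.
have atb : atom b by apply: Hl; rewrite mem_head.
exists (b * u :: l); split.
  split; last by rewrite ey !big_cons mulrAC.
  move=> c; rewrite in_cons => /orP [/eqP -> | cl]; first exact: gatomU.
  by apply: Hl; rewrite in_cons cl orbT.
by split; [exact: gas_unit | exact: gF2P_refl].
Qed.

Lemma gabsorb_atomic y u l : A y -> ~ U y -> U u -> y = \prod_(b <- l) b * u ->
  (forall b, b \in l -> atom b) -> atomicIn A y.
Proof.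
move=> Ay nUy Uu ey Hl; have [l' [[H1 H2] _]] := gabsorb Ay nUy Uu ey Hl.
split=> //; last by exists l'.
by rewrite H2; apply: gprod_neq0.
Qed.

Definition BFIn (x : K) := exists (C : seq K) (N : nat), forall l, factorizationIn A x l ->
  (size l <= N)%N /\ forall a, a \in l -> exists2 c, c \in C & asc a c.

Fixpoint lists (C : seq K) (n : nat) : seq (seq K) :=
  match n with
  | 0 => [:: [::]]
  | n'.+1 => [::] :: [seq c :: t | c <- C, t <- lists C n']
  end.

Lemma lists_mem C n t : (forall a, a \in t -> a \in C) -> (size t <= n)%N -> t \in lists C n.
Proof.
elim: n t => [|n IH] [|c t] //= H st; try by rewrite ?mem_head ?in_cons ?eqxx.
rewrite in_cons; apply/orP; right; apply: (allpairs_f (fun c t => c :: t)).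
  by apply: H; rewrite mem_head.
by apply: IH => // a al; apply: H; rewrite in_cons al orbT.
Qed.

Lemma UFFD_BF : UFFDIn A <-> forall x, atomicIn A x -> BFIn x.
Proof.
split.
  move=> H x /H [LL HLL]; exists (flatten LL), (sumn (map size LL)) => l /HLL [l' l'LL [k [pk Fk]]].
  split.
    rewrite (gF2P_size Fk) (perm_size pk).
    elim: LL l'LL {HLL} => [|m LL IH] //=; rewrite in_cons => /orP [/eqP ->|/IH h].
      exact: leq_addr.
    by apply: (leq_trans h); exact: leq_addl.
  move=> a al; have [z zk hz] := gF2P_mem Fk al; exists z => //.
  apply/flattenP; exists l' => //; by rewrite -(perm_mem pk).
move=> H x /H [C [N HCN]]; exists (lists C N) => l Hl.
have [sl Hm] := HCN l Hl.
have : exists k, Forall2P A l k /\ forall c, c \in k -> c \in C.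
  elim: l {Hl sl} Hm => [|a l IH] Hm; first by exists [::].
  have [|k [h1 h2]] := IH; first by move=> b bl; apply: Hm; rewrite in_cons bl orbT.
  have [c cC hc] := Hm a (mem_head _ _).
  exists (c :: k); split=> // d; rewrite in_cons => /orP [/eqP -> //|]; exact: h2.
move=> [k [h1 h2]]; exists k.
  by apply: lists_mem => //; rewrite -(gF2P_size h1).
by exists k; split.
Qed.

End Gen.

Section Dom.
Variables (D : idomainType) (S : pred D) (P : pred D).
Hypotheses (HP : forall p, p \in P -> primeD p)
 (HS : forall x, x \in S <-> exists u (l : seq D),
      [/\ u \in GRing.unit, all (fun p => p \in P) l & x = u * \prod_(p <- l) p])
 (Hsat : saturated_mult S)
 (Hspl : forall x, exists a s, [/\ s \in S, x = a * s &
    forall t, t \in S -> forall y,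
      (dvdIn (@wholeD D) a y /\ dvdIn (@wholeD D) t y) <-> dvdIn (@wholeD D) (a * t) y]).

Local Notation dv := (dvdIn (@wholeD D)).
Local Notation WD := (@wholeD D).

Lemma WD1 : WD 1. Proof. by []. Qed.
Lemma WDM x y : WD x -> WD y -> WD (x * y). Proof. by []. Qed.

Lemma dvI a c : dv a (a * c). Proof. by exists c. Qed.
Lemma dvE a b : dv a b -> exists c, b = a * c. Proof. by case=> c [_ ->]; exists c. Qed.
Lemma dv_refl a : dv a a. Proof. by exists 1; rewrite mulr1. Qed.
Lemma dv_trans a b c : dv a b -> dv b c -> dv a c.
Proof. by move=> /dvE [x ->] /dvE [y ->]; rewrite -mulrA; apply: dvI. Qed.
Lemma dv_mulr a b c : dv a b -> dv a (b * c).
Proof. by move=> /dvE [x ->]; rewrite -mulrA; apply: dvI. Qed.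
Lemma dv_mull a b c : dv a b -> dv a (c * b).
Proof. by rewrite mulrC; apply: dv_mulr. Qed.
Lemma dv_unit u x : u \is a GRing.unit -> dv u x.
Proof. by move=> Uu; exists (u^-1 * x); rewrite mulrA mulrV // mul1r. Qed.
Lemma dv_of_unit a u : dv a u -> u \is a GRing.unit -> a \is a GRing.unit.
Proof. by move=> /dvE [c ->]; rewrite unitrM => /andP []. Qed.
Lemma dv_M a b c d : dv a b -> dv c d -> dv (a * c) (b * d).
Proof. by move=> /dvE [x ->] /dvE [y ->]; rewrite mulrACA; apply: dvI. Qed.

Lemma unitD u : unitIn WD u <-> u \is a GRing.unit.
Proof.
split; first by move=> [_ [v [_ e]]]; apply/unitrPr; exists v.
by move=> /unitrPr [v e]; split=> //; exists v.
Qed.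

Lemma assocD a b : assocIn WD a b <-> exists u, u \is a GRing.unit /\ b = a * u.
Proof.
split; first by move=> [u [/unitD Uu e]]; exists u.
by move=> [u [/unitD Uu e]]; exists u.
Qed.

Lemma mutual_dv a b : dv a b -> dv b a -> a != 0 -> exists u, u \is a GRing.unit /\ b = a * u.
Proof.
move=> /dvE [c ec] /dvE [d ed] a0; exists c; split=> //.
apply/unitrPr; exists d; apply: (mulfI a0).
by rewrite mulrA -ec -ed mulr1.
Qed.

Lemma pr_ne0 p : p \in P -> p != 0. Proof. by move/HP; case. Qed.
Lemma pr_nunit p : p \in P -> p \isn't a GRing.unit. Proof. by move/HP; case. Qed.
Lemma pr_dvM p a b : p \in P -> dv p (a * b) -> dv p a \/ dv p b.
Proof. by move/HP => [_ _ H]; apply: H. Qed.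

Lemma pr_dv_prod p l : p \in P -> dv p (\prod_(q <- l) q) -> exists2 q, q \in l & dv p q.
Proof.
move=> pP; elim: l => [|q l IH]; rewrite ?big_nil ?big_cons.
  by move=> /dv_of_unit h; move: (pr_nunit pP); rewrite h ?unitr1.
case/(pr_dvM pP) => [h|/IH [r rl h]]; first by exists q; rewrite ?mem_head.
by exists r; rewrite // in_cons rl orbT.
Qed.

Lemma pr_atom p : p \in P -> atomIn WD p.
Proof.
move=> pP; split=> //; [exact: pr_ne0| by move/unitD; apply/negP; exact: pr_nunit|].
move=> b c _ _ e.
have : dv p (b * c) by rewrite -e; apply: dv_refl.
case/(pr_dvM pP) => /dvE [d ed].
  right; apply/unitD/unitrPr; exists d; apply: (mulfI (pr_ne0 pP)).
  by rewrite mulr1 [RHS]e ed -mulrA [d * c]mulrC.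
left; apply/unitD/unitrPr; exists d; apply: (mulfI (pr_ne0 pP)).
by rewrite mulr1 [RHS]e ed mulrCA.
Qed.

Lemma prodP_neq0 l : all (fun p => p \in P) l -> \prod_(p <- l) p != 0.
Proof.
elim: l => [|p l IH]; rewrite ?big_nil ?oner_neq0 //= big_cons => /andP [pP lP].
by rewrite mulf_neq0 ?IH ?pr_ne0.
Qed.

Lemma S_ne0 s : s \in S -> s != 0.
Proof.
move/HS => [u [l [Uu lP ->]]]; rewrite mulf_neq0 ?prodP_neq0 //.
by apply/negP => /eqP u0; move: Uu; rewrite u0 unitr0.
Qed.

Lemma S_unit u : u \is a GRing.unit -> u \in S.
Proof. by move=> Uu; apply/HS; exists u, [::]; rewrite big_nil mulr1. Qed.

Lemma S_P p : p \in P -> p \in S.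
Proof. by move=> pP; apply/HS; exists 1, [:: p]; rewrite unitr1 /= pP big_cons big_nil mulr1 mul1r. Qed.

Lemma S_mul a b : a \in S -> b \in S -> a * b \in S.
Proof. by case: Hsat => _ H _; apply: H. Qed.

Lemma S_div a b : a * b \in S -> a \in S /\ b \in S.
Proof. by case: Hsat => _ _ H; apply: H. Qed.

Lemma S_prod l : (forall q, q \in l -> q \in S) -> \prod_(q <- l) q \in S.
Proof.
elim: l => [|q l IH] H; first by rewrite big_nil S_unit ?unitr1.
rewrite big_cons S_mul //; first by apply: H; rewrite mem_head.
by apply: IH => r rl; apply: H; rewrite in_cons rl orbT.
Qed.

Definition free (a : D) := a != 0 /\ forall p, p \in P -> ~ dv p a.

Lemma free_dv a b : free a -> dv b a -> free b.
Proof.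
move=> [a0 H] hb; split.
  by apply/negP => /eqP b0; move: hb a0; rewrite b0 => /dvE [c ->]; rewrite mul0r eqxx.
by move=> p pP hp; apply: (H p pP); apply: dv_trans hb.
Qed.

Lemma free_mul a b : free a -> free b -> free (a * b).
Proof.
move=> [a0 Ha] [b0 Hb]; split; first by rewrite mulf_neq0.
by move=> p pP /(pr_dvM pP) [/(Ha p pP)|/(Hb p pP)].
Qed.

Lemma free_unit u : u \is a GRing.unit -> free u.
Proof.
move=> Uu; split; first by apply/negP => /eqP u0; move: Uu; rewrite u0 unitr0.
move=> p pP /dv_of_unit /(_ Uu); apply/negP; exact: pr_nunit.
Qed.

Lemma free_prod l : (forall q, q \in l -> free q) -> free (\prod_(q <- l) q).
Proof.
elim: l => [|q l IH] H; first by rewrite big_nil; apply: free_unit; exact: unitr1.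
rewrite big_cons; apply: free_mul; first by apply: H; rewrite mem_head.
by apply: IH => r rl; apply: H; rewrite in_cons rl orbT.
Qed.

Lemma split_free x : x != 0 -> exists a s, [/\ free a, s \in S & x = a * s].
Proof.
move=> x0; have [a [s [sS xe H]]] := Hspl x; exists a, s; split=> //.
have a0 : a != 0 by apply/negP => /eqP a0; move: x0; rewrite xe a0 mul0r eqxx.
split=> // p pP hp.
have /(H p (S_P pP) a) : dv a a /\ dv p a by split=> //; exact: dv_refl.
move=> /dvE [c ec]; move: (pr_nunit pP) => /negP; apply; apply/unitrPr; exists c.
by apply: (mulfI a0); rewrite mulr1 mulrA [RHS]ec.
Qed.

Lemma key_cancel a t c : free a -> t \in S -> dv a (c * t) -> dv a c.
Proof.
move=> [a0 Ha] /HS [u [l [Uu lP ->]]].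
elim: l c lP => [|p l IH] c /=.
  rewrite big_nil mulr1 => _ /dvE [d ed]; exists (d * u^-1); split=> //.
  by rewrite mulrA -ed -mulrA mulrV // mulr1.
move=> /andP [pP lP]; rewrite big_cons (mulrCA u) (mulrA c) => H.
have /dvE [d ed] := IH _ lP H.
have : dv p (a * d) by rewrite -ed; apply: dv_mull; apply: dv_refl.
case/(pr_dvM pP) => [/(Ha p pP) //|/dvE [e ee]].
exists e; split=> //; apply: (mulIf (pr_ne0 pP)).
by rewrite ed ee mulrCA mulrC.
Qed.

Lemma free_dvS a s : free a -> s \in S -> dv a s -> a \is a GRing.unit.
Proof.
move=> fa sS h; have : dv a (1 * s) by rewrite mul1r.
by move/(key_cancel fa sS)/dv_of_unit; apply; rewrite unitr1.
Qed.

Lemma uniq_split a b s t : free a -> free b -> s \in S -> t \in S -> a * s = b * t ->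
  exists u, u \is a GRing.unit /\ b = a * u.
Proof.
move=> fa fb sS tS e; apply: mutual_dv; last by case: fa.
  by apply: (key_cancel fa tS); rewrite -e; apply: dvI.
by apply: (key_cancel fb sS); rewrite e; apply: dvI.
Qed.

Lemma atom_cases q : atomIn WD q -> free q \/ q \in S.
Proof.
move=> [_ q0 _ irr]; have [a [s [fa sS qe]]] := split_free q0.
case: (irr a s) => // /unitD Ua.
  by right; rewrite qe; apply: S_mul => //; exact: S_unit.
by left; rewrite qe; apply: free_mul => //; exact: free_unit.
Qed.

Lemma S_nunit_P q : q \in S -> q \isn't a GRing.unit -> exists2 p, p \in P & exists c, q = p * c.
Proof.
move=> /HS [u [[|p l] [Uu lP ->]]]; first by rewrite big_nil mulr1 Uu.
move=> _; move: lP => /= /andP [pP _]; exists p => //.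
by exists (u * \prod_(r <- l) r); rewrite big_cons mulrCA.
Qed.

Lemma pr_dv_pr p p' : p \in P -> p' \in P -> dv p p' -> exists u, u \is a GRing.unit /\ p' = p * u.
Proof.
move=> pP p'P /dvE [c ec]; exists c; split=> //.
case: (pr_atom p'P) => _ _ _ /(_ p c I I ec) [/unitD|/unitD] // Up.
by move: (pr_nunit pP); rewrite Up.
Qed.

Lemma atom_S_pr q : atomIn WD q -> q \in S ->
  exists2 p, p \in P & exists u, u \is a GRing.unit /\ q = p * u.
Proof.
move=> aq qS; have nU : q \isn't a GRing.unit by apply/negP => /unitD; case: aq.
have [p pP [c ec]] := S_nunit_P qS nU; exists p => //; exists c; split=> //.
case: aq => _ _ _ /(_ p c I I ec) [/unitD|/unitD] // Up.
by move: (pr_nunit pP); rewrite Up.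
Qed.

Lemma SAtomDiv q a u ps : atomIn WD q -> q \in S -> free a -> u \is a GRing.unit ->
  all (fun p => p \in P) ps -> dv q (a * (u * \prod_(p <- ps) p)) ->
  exists2 p', p' \in ps & assocIn WD q p'.
Proof.
move=> aq qS [a0 Ha] Uu psP hq.
have [p pP [w [Uw qe]]] := atom_S_pr aq qS.
have hp : dv p (a * (u * \prod_(p <- ps) p)) by apply: dv_trans hq; rewrite qe; apply: dvI.
case/(pr_dvM pP): hp => [/(Ha p pP) //|].
case/(pr_dvM pP) => [/dv_of_unit /(_ Uu)|]; first by rewrite (negPf (pr_nunit pP)).
case/(pr_dv_prod pP) => p' p'ps hp'.
have p'P : p' \in P by move/allP: psP; apply.
have [c [Uc ec]] := pr_dv_pr pP p'P hp'.
exists p' => //; apply/assocD; exists (w^-1 * c); split; first by rewrite unitrM unitrV Uw.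
by rewrite qe ec -mulrA mulVKr.
Qed.

Lemma S_count l ps : (forall q, q \in l -> atomIn WD q /\ q \in S) ->
  all (fun p => p \in P) ps -> dv (\prod_(q <- l) q) (\prod_(p <- ps) p) -> (size l <= size ps)%N.
Proof.
elim: l ps => [|q l IH] ps Hl psP //.
have [aq qS] := Hl q (mem_head _ _).
have [p pP [w [Uw qe]]] := atom_S_pr aq qS.
rewrite big_cons => hd.
have : dv p (\prod_(p <- ps) p) by apply: dv_trans hd; rewrite qe -mulrA; apply: dvI.
case/(pr_dv_prod pP) => p' p'ps hp'.
have p'P : p' \in P by move/allP: psP; apply.
have [c [Uc ec]] := pr_dv_pr pP p'P hp'.
have Hl' : forall r, r \in l -> atomIn WD r /\ r \in S.
  by move=> r rl; apply: Hl; rewrite in_cons rl orbT.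
have := IH (rem p' ps) Hl'.
rewrite size_rem // => H.
have : (size l <= (size ps).-1)%N.
  apply: H; first by apply/allP => r /mem_rem; move/allP: psP; apply.
  move: hd; rewrite (big_rem _ p'ps) /= qe => /dvE [k ek].
  have e1 : c * \prod_(y <- rem p' ps) y = w * \prod_(j <- l) j * k.
    by apply: (mulfI (pr_ne0 pP)); rewrite mulrA -ec ek !mulrA.
  exists (w * k * c^-1); split=> //.
  rewrite -[\prod_(y <- rem p' ps) y](mulKr Uc) e1.
  by ring.
have sp : (0 < size ps)%N by case: (ps) p'ps.
by move=> h; rewrite /= -(prednK sp) ltnS.
Qed.


Lemma partition_atoms l : (forall q, q \in l -> atomIn WD q) ->
  exists lf lp, [/\ perm_eq l (lf ++ lp), (forall q, q \in lf -> free q /\ atomIn WD q)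
    & (forall q, q \in lp -> atomIn WD q /\ q \in S)].
Proof.
elim: l => [|q l IH] H; first by exists [::], [::].
have [|lf [lp [pe Hf Hp]]] := IH; first by move=> r rl; apply: H; rewrite in_cons rl orbT.
have aq := H q (mem_head _ _).
case: (atom_cases aq) => [fq|qS].
  exists (q :: lf), lp; split=> //; first by rewrite /= perm_cons.
  by move=> r; rewrite in_cons => /orP [/eqP ->|]; [split|apply: Hf].
exists lf, (q :: lp); split=> //.
  by rewrite perm_sym (perm_catCA lf [:: q] lp (q :: l)) /= perm_cons perm_sym.
by move=> r; rewrite in_cons => /orP [/eqP ->|]; [split|apply: Hp].
Qed.

Lemma split_fact x l a s : factorizationIn WD x l -> x = a * s -> free a -> s \in S ->
  exists lf lp, [/\ perm_eq l (lf ++ lp), (forall q, q \in lf -> free q /\ atomIn WD q),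
    (forall q, q \in lp -> atomIn WD q /\ q \in S),
    (exists w, w \is a GRing.unit /\ a = \prod_(q <- lf) q * w)
    & (exists w, w \is a GRing.unit /\ s = \prod_(q <- lp) q * w)].
Proof.
move=> [Hl xe] e fa sS.
have [lf [lp [pe Hf Hp]]] := partition_atoms Hl.
have ex : x = \prod_(q <- lf) q * \prod_(q <- lp) q by rewrite xe (perm_big _ pe) big_cat.
have ff : free (\prod_(q <- lf) q) by apply: free_prod => q /Hf [].
have pS : \prod_(q <- lp) q \in S by apply: S_prod => q /Hp [].
have [u [Uu eu]] := uniq_split ff fa pS sS (etrans (esym ex) e).
exists lf, lp; split=> //; first by exists u.
exists u^-1; split; first by rewrite unitrV.
have f0 : \prod_(q <- lf) q != 0 by case: ff.
have e2 : u * s = \prod_(q <- lp) q.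
  by apply: (mulfI f0); rewrite /= mulrA -eu -e ex.
by rewrite -e2 mulrC mulKr.
Qed.

Local Notation F := {fraction D}.
Local Notation "x %:F" := (@FracField.tofrac D x).
Local Notation AS := (locS S).
Local Notation US := (unitIn AS).

Lemma tof_neq0 x : x != 0 -> x%:F != 0.
Proof. by rewrite tofrac_eq0. Qed.

Lemma tof_inj x y : x%:F = y%:F -> x = y.
Proof. by move/eqP; rewrite tofrac_eq => /eqP. Qed.

Lemma tof_frac x : x%:F = x%:F / 1%:F.
Proof. by rewrite tofrac1 divr1. Qed.

Lemma mulfrac x s y t : x%:F / s%:F * (y%:F / t%:F) = (x * y)%:F / (s * t)%:F.
Proof. by rewrite mulf_div !tofracM. Qed.

Lemma frac_eq x s y t : s \in S -> t \in S -> x%:F / s%:F = y%:F / t%:F -> x * t = y * s.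
Proof.
move=> sS tS /eqP; rewrite eqr_div ?tof_neq0 ?S_ne0 // -!tofracM => /eqP; exact: tof_inj.
Qed.

Lemma S1 : 1 \in S. Proof. by apply: S_unit; exact: unitr1. Qed.

Lemma AS_tof x : AS x%:F.
Proof. by exists x, 1; rewrite S1 -tof_frac. Qed.

Lemma AS1 : AS 1.
Proof. by rewrite -tofrac1; apply: AS_tof. Qed.

Lemma ASM y z : AS y -> AS z -> AS (y * z).
Proof.
move=> [x [s [sS ->]]] [x' [s' [s'S ->]]]; exists (x * x'), (s * s').
by rewrite mulfrac S_mul.
Qed.

Lemma US_frac x s : x \in S -> s \in S -> US (x%:F / s%:F).
Proof.
move=> xS sS; split; first by exists x, s.
exists (s%:F / x%:F); split; first by exists s, x.
by rewrite mulfrac [s * x]mulrC divff // tof_neq0 // mulf_neq0 ?S_ne0.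
Qed.

Lemma US_unit u : u \is a GRing.unit -> US u%:F.
Proof. by move=> Uu; rewrite tof_frac; apply: US_frac; [apply: S_unit|exact: S1]. Qed.

Lemma normal z : AS z -> z != 0 -> exists a v, [/\ free a, US v & z = a%:F * v].
Proof.
move=> [x [s [sS ze]]] z0.
have x0 : x != 0 by apply/negP => /eqP x0; move: z0; rewrite ze x0 tofrac0 mul0r eqxx.
have [a [t [fa tS xe]]] := split_free x0.
exists a, (t%:F / s%:F); split=> //; first exact: US_frac.
by rewrite ze xe tofracM mulrA.
Qed.

Lemma free_US a : free a -> US a%:F -> a \is a GRing.unit.
Proof.
move=> fa [_ [v [[c [t [tS ->]]] e]]].
have : (a * c)%:F / (1 * t)%:F = 1%:F / 1%:F by rewrite -mulfrac -!tof_frac e tofrac1.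
move/frac_eq => /(_ (S_mul S1 tS) S1); rewrite mulr1 !mul1r => e2.
by apply: (free_dvS fa tS); rewrite -e2; apply: dvI.
Qed.

Lemma dv_back a b : free a -> dvdIn AS a%:F b%:F -> dv a b.
Proof.
move=> fa [v [[c [t [tS ->]]] e]].
have : b%:F / 1%:F = (a * c)%:F / (1 * t)%:F by rewrite -mulfrac -!tof_frac e.
move/frac_eq => /(_ S1 (S_mul S1 tS)); rewrite !mul1r mulr1 => e2.
by apply: (key_cancel fa tS); rewrite e2; apply: dvI.
Qed.

Lemma dv_fwd a b : dv a b -> dvdIn AS a%:F b%:F.
Proof. by move=> /dvE [c ->]; exists c%:F; rewrite tofracM; split=> //; apply: AS_tof. Qed.

Lemma assoc_fwd a b : assocIn WD a b -> assocIn AS a%:F b%:F.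
Proof. by move=> /assocD [u [Uu ->]]; exists u%:F; rewrite tofracM; split=> //; exact: US_unit. Qed.

Lemma gas_dvd (K : idomainType) (A : K -> Prop) a b : assocIn A a b -> dvdIn A a b.
Proof. by move=> [u [[Au _] e]]; exists u. Qed.

Lemma assoc_back a b : free a -> free b -> assocIn AS a%:F b%:F -> assocIn WD a b.
Proof.
move=> fa fb h; apply/assocD; apply: mutual_dv; last by case: fa.
  by apply: dv_back => //; apply: gas_dvd.
by apply: dv_back => //; apply: gas_dvd; exact: (gas_sym h).
Qed.

Lemma atom_fwd a : free a -> atomIn WD a -> atomIn AS a%:F.
Proof.
move=> fa [_ a0 nUa irr]; split; [exact: AS_tof|exact: tof_neq0| |].
  by move/(free_US fa)/unitD.
move=> b c [b1 [s1 [s1S ->]]] [b2 [s2 [s2S ->]]].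
rewrite mulfrac tof_frac => /(frac_eq S1 (S_mul s1S s2S)); rewrite mulr1 => e.
have s0 : s1 * s2 != 0 by rewrite mulf_neq0 ?S_ne0.
have b0 : b1 * b2 != 0 by rewrite -e mulf_neq0.
have b10 : b1 != 0 by move: b0; rewrite mulf_eq0 negb_or => /andP [].
have b20 : b2 != 0 by move: b0; rewrite mulf_eq0 negb_or => /andP [].
have [c1 [t1 [fc1 t1S e1]]] := split_free b10.
have [c2 [t2 [fc2 t2S e2]]] := split_free b20.
have : a * (s1 * s2) = (c1 * c2) * (t1 * t2) by rewrite e e1 e2 mulrACA.
move/(uniq_split fa (free_mul fc1 fc2) (S_mul s1S s2S) (S_mul t1S t2S)) => [u [Uu eu]].
have : a = c1 * (c2 * u^-1) by rewrite mulrA eu mulrK.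
case/(irr _ _ I I) => /unitD Uc.
  by left; rewrite e1; apply: US_frac => //; apply: S_mul => //; exact: S_unit.
right; rewrite e2; apply: US_frac => //; apply: S_mul => //; apply: S_unit.
by move: Uc; rewrite unitrM => /andP [].
Qed.

Lemma atom_back a : free a -> atomIn AS a%:F -> atomIn WD a.
Proof.
move=> fa [_ _ nU irr]; split=> //; first by case: fa.
  by move/unitD/US_unit.
move=> b c _ _ e.
have fb : free b by apply: free_dv fa _; rewrite e; apply: dvI.
have fc : free c by apply: free_dv fa _; rewrite e mulrC; apply: dvI.
case: (irr b%:F c%:F (AS_tof b) (AS_tof c)); first by rewrite e tofracM.
  by move/(free_US fb)/unitD; left.
by move/(free_US fc)/unitD; right.
Qed.

Lemma atomS_pull y : atomIn AS y -> exists b v, [/\ free b, atomIn WD b, US v & y = b%:F * v].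
Proof.
move=> ay; have [Ay y0 _ _] := ay.
have [b [v [fb Uv ye]]] := normal Ay y0.
have [w [Uw vw]] := gUinv Uv.
exists b, v; split=> //; apply: atom_back => //.
have -> : b%:F = y * w by rewrite ye -mulrA vw mulr1.
exact (gatomU ASM ay Uw).
Qed.

Lemma atom_img q : atomIn WD q -> (free q /\ atomIn AS q%:F) \/ (q \in S /\ US q%:F).
Proof.
move=> aq; case: (atom_cases aq) => [fq|qS]; first by left; split=> //; exact: atom_fwd.
by right; split=> //; rewrite tof_frac; apply: US_frac => //; exact: S1.
Qed.

Local Notation tof := (@FracField.tofrac D).

Lemma prod_map_tof l : \prod_(y <- map tof l) y = (\prod_(b <- l) b)%:F.
Proof. by rewrite big_map rmorph_prod. Qed.

Lemma mem_dv_prod q l : q \in l -> dv q (\prod_(b <- l) b).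
Proof. by move=> ql; rewrite (big_rem _ ql) /=; apply: dvI. Qed.

Lemma F2P_map l1 l2 : Forall2P WD l1 l2 -> Forall2P AS (map tof l1) (map tof l2).
Proof.
elim: l1 l2 => [|a l1 IH] [|b l2] //= [h1 h2]; split; [exact: assoc_fwd|exact: IH].
Qed.

Lemma dS_trans a b c : dvdIn AS a b -> dvdIn AS b c -> dvdIn AS a c.
Proof.
move=> [x [Ax ->]] [y [Ay ->]]; exists (x * y); split; [exact: ASM|by rewrite mulrA].
Qed.

Lemma dS_as a b : assocIn AS a b -> dvdIn AS a b.
Proof. exact: gas_dvd. Qed.

Lemma as_sym (a b : F) : assocIn AS a b -> assocIn AS b a.
Proof. exact: gas_sym. Qed.

Lemma as_trans (a b c : F) : assocIn AS a b -> assocIn AS b c -> assocIn AS a c.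
Proof. move=> h1 h2; exact (gas_trans ASM h1 h2). Qed.

Lemma pull l : (forall y, y \in l -> atomIn AS y) ->
  exists lb : seq D, [/\ (forall b, b \in lb -> free b /\ atomIn WD b),
    Forall2P AS l (map tof lb) &
    exists v, US v /\ \prod_(y <- l) y = (\prod_(b <- lb) b)%:F * v].
Proof.
elim: l => [|y l IH] H.
  exists [::]; split=> //; exists 1; split; first exact: gU1 AS1.
  by rewrite !big_nil tofrac1 mulr1.
have [|lb [Hlb F2 [v [Uv ev]]]] := IH; first by move=> z zl; apply: H; rewrite in_cons zl orbT.
have [b [v1 [fb ab Uv1 ye]]] := atomS_pull (H y (mem_head _ _)).
exists (b :: lb); split.
- by move=> c; rewrite in_cons => /orP [/eqP ->|]; [split|apply: Hlb].
- by split=> //=; apply: as_sym; exists v1.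
exists (v1 * v); split; first exact (gUM ASM Uv1 Uv).
by rewrite !big_cons ev ye tofracM mulrACA.
Qed.

Lemma zfact z l a v : factorizationIn AS z l -> z = a%:F * v -> US v -> free a -> ~ US z ->
  exists lb', factorizationIn WD a lb' /\ Forall2P AS l (map tof lb').
Proof.
move=> [Hl zl] ze Uv fa nUz.
have [lb [Hlb F2 [v1 [Uv1 ev1]]]] := pull Hl.
have [w [Uw vw]] := gUinv Uv.
have flb : free (\prod_(b <- lb) b) by apply: free_prod => b /Hlb [].
have : assocIn AS (\prod_(b <- lb) b)%:F a%:F.
  exists (v1 * w); split; first exact (gUM ASM Uv1 Uw).
  by rewrite mulrA -ev1 -zl ze -mulrA vw mulr1.
move/(assoc_back flb fa)/assocD => [u [Uu ea]].
have nUa : ~ unitIn WD a.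
  by move/unitD/US_unit => Ua; apply: nUz; rewrite ze; exact (gUM ASM Ua Uv).
have [lb' [fl F3]] := gabsorb WD1 WDM I nUa (proj2 (unitD u) Uu) ea (fun b bl => proj2 (Hlb b bl)).
exists lb'; split=> //; exact (gF2P_trans ASM F2 (F2P_map F3)).
Qed.

Lemma zfact_atomic z l a v : factorizationIn AS z l -> z = a%:F * v -> US v -> free a -> ~ US z ->
  atomicIn WD a.
Proof.
move=> fl ze Uv fa nUz; have [lb' [fl' _]] := zfact fl ze Uv fa nUz.
split=> //; [by case: fa| |by exists lb'].
by move/unitD/US_unit => Ua; apply: nUz; rewrite ze; exact (gUM ASM Ua Uv).
Qed.

Lemma dfact a lf w : (forall q, q \in lf -> free q /\ atomIn WD q) -> w \is a GRing.unit ->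
  a = \prod_(q <- lf) q * w -> a \isn't a GRing.unit ->
  exists l'', factorizationIn AS a%:F l'' /\ Forall2P AS (map tof lf) l''.
Proof.
move=> Hf Uw ea nUa.
have fa : free a by rewrite ea; apply: free_mul; [apply: free_prod => q /Hf []|exact: free_unit].
apply: (gabsorb AS1 ASM (AS_tof a) _ (US_unit Uw)).
- by move/(free_US fa); apply/negP.
- by rewrite prod_map_tof -tofracM -ea.
- by move=> y /mapP [q /Hf [fq aq] ->]; exact: atom_fwd.
Qed.

Lemma dfact_atomic a lf w : (forall q, q \in lf -> free q /\ atomIn WD q) -> w \is a GRing.unit ->
  a = \prod_(q <- lf) q * w -> a \isn't a GRing.unit -> atomicIn AS a%:F.
Proof.
move=> Hf Uw ea nUa; have [l'' [fl _]] := dfact Hf Uw ea nUa.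
have fa : free a by rewrite ea; apply: free_mul; [apply: free_prod => q /Hf []|exact: free_unit].
split; [exact: AS_tof|by apply: tof_neq0; case: fa| |by exists l''].
by move/(free_US fa); apply/negP.
Qed.

Lemma pullback (L' : seq F) : exists LD : seq D, forall y, y \in L' ->
  (exists b, free b /\ assocIn AS y b%:F) -> exists2 c, c \in LD & (free c /\ assocIn AS y c%:F).
Proof.
elim: L' => [|y0 L IH]; first by exists [::].
have [LD HLD] := IH.
case: (classic (exists b, free b /\ assocIn AS y0 b%:F)) => [[b hb]|nb].
  exists (b :: LD) => y; rewrite in_cons => /orP [/eqP -> _|yL hy].
    by exists b => //; rewrite mem_head.
  by have [c cL hc] := HLD y yL hy; exists c => //; rewrite in_cons cL orbT.
exists LD => y; rewrite in_cons => /orP [/eqP -> //|yL hy]; exact: HLD.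
Qed.

Lemma CA_fwd : completely_atomicIn WD -> completely_atomicIn AS.
Proof.
move=> H z w [Az z0 nUz [l fl]] Aw nUw [c [Ac zwc]].
have [a [v [fa Uv ze]]] := normal Az z0.
have ata := zfact_atomic fl ze Uv fa nUz.
have w0 : w != 0 by apply/negP => /eqP w0; move: z0; rewrite zwc w0 mul0r eqxx.
have [a' [v' [fa' Uv' we]]] := normal Aw w0.
have [vi [Uvi vvi]] := gUinv Uv.
have hd : dv a' a.
  apply: dv_back => //; exists (v' * c * vi); split.
    by apply: ASM; [apply: ASM => //; case: Uv'|case: Uvi].
  by rewrite !mulrA -we -zwc ze -mulrA vvi mulr1.
have nUa' : ~ unitIn WD a'.
  by move/unitD/US_unit => Ua; apply: nUw; rewrite we; exact (gUM ASM Ua Uv').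
have [_ _ _ [lb [Hlb ea']]] := H a a' ata I nUa' hd.
apply: (gabsorb_atomic AS1 ASM Aw nUw Uv' (l := map tof lb)); first by rewrite prod_map_tof -ea'.
move=> y /mapP [b bl ->]; apply: atom_fwd; last exact: Hlb.
by apply: free_dv fa' _; rewrite ea'; apply: mem_dv_prod.
Qed.

Lemma CA_bwd : completely_atomicIn AS -> completely_atomicIn WD.
Proof.
move=> H x d [_ x0 nUx [l fl]] _ nUd hd.
have d0 : d != 0 by apply/negP => /eqP d0; move: hd x0; rewrite d0 => /dvE [c ->]; rewrite mul0r eqxx.
have [a [s [fa sS xe]]] := split_free x0.
have [a' [t [fa' tS de]]] := split_free d0.
have [u' [ps [Uu' psP te]]] := (HS t).1 tS.
have [lb [Hlb [u [Uu ea']]]] : exists lb, (forall b, b \in lb -> free b /\ atomIn WD b) /\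
    exists u, u \is a GRing.unit /\ a' = \prod_(b <- lb) b * u.
  case: (boolP (a' \is a GRing.unit)) => Ua'.
    by exists [::]; split=> //; exists a'; rewrite big_nil mul1r.
  have ha : dv a' a.
    apply: (key_cancel fa' sS); rewrite -xe; apply: dv_trans hd.
    by rewrite de; apply: dvI.
  have nUa : a \isn't a GRing.unit by apply/negP => Ua; move: Ua'; rewrite (dv_of_unit ha Ua).
  have [lf [lp [_ Hf _ [w [Uw ea]] _]]] := split_fact fl xe fa sS.
  have ata := dfact_atomic Hf Uw ea nUa.
  have nUa'F : ~ US a'%:F by move/(free_US fa'); apply/negP.
  have [_ _ _ [l2 [Hl2 el2]]] := H _ _ ata (AS_tof a') nUa'F (dv_fwd ha).
  have [lb [Hlb F2 [v [Uv ev]]]] := pull Hl2.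
  have flb : free (\prod_(b <- lb) b) by apply: free_prod => b /Hlb [].
  have : assocIn AS (\prod_(b <- lb) b)%:F a'%:F by exists v; split=> //; rewrite el2 ev.
  move/(assoc_back flb fa')/assocD => [u [Uu e]].
  by exists lb; split=> //; exists u.
have Uuu : unitIn WD (u * u') by apply/unitD; rewrite unitrM Uu Uu'.
apply: (gabsorb_atomic WD1 WDM I nUd Uuu (l := lb ++ ps)).
- by rewrite big_cat /= de ea' te; ring.
- by move=> b; rewrite mem_cat => /orP [/Hlb []//|bp]; apply: pr_atom; move/allP: psP; apply.
Qed.

Lemma RIDF_fwd : RIDFIn WD -> RIDFIn AS.
Proof.
move=> H z [Az z0 nUz [l fl]].
have [a [v [fa Uv ze]]] := normal Az z0.
have [L HL] := H a (zfact_atomic fl ze Uv fa nUz).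
exists (map tof L) => y ay hy.
have [b [v1 [fb ab Uv1 ye]]] := atomS_pull ay.
have [vi [Uvi vvi]] := gUinv Uv.
have hb : dv b a.
  apply: dv_back => //; apply: dS_trans (dS_trans hy _).
    by apply: dS_as; exists v1.
  by apply: dS_as; exists vi; split=> //; rewrite ze -mulrA vvi mulr1.
have [c cL hc] := HL b ab hb.
exists c%:F; first exact: map_f.
by apply: as_trans (assoc_fwd hc); apply: as_sym; exists v1.
Qed.

Lemma RIDF_bwd : RIDFIn AS -> RIDFIn WD.
Proof.
move=> H x [_ x0 nUx [l fl]].
have [a [s [fa sS xe]]] := split_free x0.
have [u [ps [Uu psP se]]] := (HS s).1 sS.
have [LD HLD] : exists LD : seq D, forall q, free q -> atomIn WD q -> dv q a ->
    exists2 c, c \in LD & assocIn WD q c.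
  case: (boolP (a \is a GRing.unit)) => Ua.
    exists [::] => q fq [_ _ nUq _] /dv_of_unit /(_ Ua) Uq.
    by exfalso; apply: nUq; apply/unitD.
  have [lf [lp [_ Hf _ [w [Uw ea]] _]]] := split_fact fl xe fa sS.
  have [L' HL'] := H _ (dfact_atomic Hf Uw ea Ua).
  have [LD HLD] := pullback L'.
  exists LD => q fq aq hq.
  have [y yL hy] := HL' _ (atom_fwd fq aq) (dv_fwd hq).
  have [c cLD [fc hc]] := HLD y yL (ex_intro _ q (conj fq (as_sym hy))).
  by exists c => //; apply: assoc_back => //; exact: as_trans hy hc.
exists (ps ++ LD) => q aq hq.
case: (atom_cases aq) => [fq|qS].
  have hq' : dv q (a * s) by rewrite -xe.
  have [c cL hc] := HLD q fq aq (key_cancel fq sS hq').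
  by exists c => //; rewrite mem_cat cL orbT.
have hq' : dv q (a * (u * \prod_(p <- ps) p)) by rewrite -se -xe.
have [p' p'ps hp'] := SAtomDiv aq qS fa Uu psP hq'.
by exists p' => //; rewrite mem_cat p'ps.
Qed.

Lemma BF_fwd : (forall x, atomicIn WD x -> BFIn WD x) -> forall z, atomicIn AS z -> BFIn AS z.
Proof.
move=> H z [Az z0 nUz [l fl]].
have [a [v [fa Uv ze]]] := normal Az z0.
have [C [N HCN]] := H a (zfact_atomic fl ze Uv fa nUz).
exists (map tof C), N => l' fl'.
have [lb' [flb F2]] := zfact fl' ze Uv fa nUz.
have [sz Hm] := HCN lb' flb.
split; first by rewrite (gF2P_size F2) size_map.
move=> y yl; have [z2 z2m hz2] := gF2P_mem F2 yl.
move: z2m => /mapP [b bl eb]; have [c cC hc] := Hm b bl.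
exists c%:F; first exact: map_f.
by apply: as_trans hz2 _; rewrite eb; exact: assoc_fwd.
Qed.

Lemma BF_bwd : (forall z, atomicIn AS z -> BFIn AS z) -> forall x, atomicIn WD x -> BFIn WD x.
Proof.
move=> H x [_ x0 nUx [l fl]].
have [a [s [fa sS xe]]] := split_free x0.
have [u [ps [Uu psP se]]] := (HS s).1 sS.
have [CD [N' HC]] : exists (CD : seq D) (N' : nat), forall (lf : seq D) w, (forall q, q \in lf -> free q /\ atomIn WD q) ->
    w \is a GRing.unit -> a = \prod_(q <- lf) q * w ->
    (size lf <= N')%N /\ forall q, q \in lf -> exists2 c, c \in CD & assocIn WD q c.
  case: (boolP (a \is a GRing.unit)) => Ua.
    exists [::], 0%N; case=> [|q lf] w Hf Uw ea; first by split.
    have [_ [_ _ nUq _]] := Hf q (mem_head _ _).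
    exfalso; apply: nUq; apply/unitD; apply: (dv_of_unit _ Ua).
    by rewrite ea big_cons -mulrA; apply: dvI.
  have [lf0 [lp0 [_ Hf0 _ [w0 [Uw0 ea0]] _]]] := split_fact fl xe fa sS.
  have [C' [N' HCN]] := H _ (dfact_atomic Hf0 Uw0 ea0 Ua).
  have [CD HCD] := pullback C'.
  exists CD, N' => lf w Hf Uw ea.
  have [l'' [fl'' F2]] := dfact Hf Uw ea Ua.
  have [sz Hm] := HCN l'' fl''.
  split; first by rewrite -(size_map tof) (gF2P_size F2).
  move=> q ql; have [fq aq] := Hf q ql.
  have [y yl hy] := gF2P_mem F2 (map_f tof ql).
  have [c' c'C hc'] := Hm y yl.
  have hqc' := as_trans hy hc'.
  have [c cD [fc hc]] := HCD c' c'C (ex_intro _ q (conj fq (as_sym hqc'))).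
  by exists c => //; apply: assoc_back => //; exact: as_trans hqc' hc.
exists (CD ++ ps), (N' + size ps)%N => l' fl'.
have [lf [lp [pe Hf Hp [w [Uw ea]] [w' [Uw' se']]]]] := split_fact fl' xe fa sS.
have [szf Hmf] := HC lf w Hf Uw ea.
split.
  rewrite (perm_size pe) size_cat leq_add //.
  apply: S_count => //; exists (w' * u^-1); split=> //.
  by rewrite -[\prod_(p <- ps) p](mulKr Uu) -se se'; ring.
move=> q ql'; have : q \in lf ++ lp by rewrite -(perm_mem pe).
rewrite mem_cat => /orP [qf|qp].
  by have [c cD hc] := Hmf q qf; exists c => //; rewrite mem_cat cD.
have [aq qS] := Hp q qp.
have hq : dv q (a * (u * \prod_(p <- ps) p)).
  by rewrite -se -xe; case: fl' => _ ->; apply: mem_dv_prod.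
have [p' p'ps hp'] := SAtomDiv aq qS fa Uu psP hq.
by exists p' => //; rewrite mem_cat p'ps orbT.
Qed.

End Dom.

Unset Implicit Arguments.
Set Strict Implicit.

Theorem proposition3p3 (D : idomainType) (S : pred D) :
  generated_by_primes S -> splitting S ->
  [/\ completely_atomicIn (@wholeD D) <-> completely_atomicIn (locS S),
      RIDFIn (@wholeD D) <-> RIDFIn (locS S)
    & UFFDIn (@wholeD D) <-> UFFDIn (locS S)].
Proof.
move=> [P [HP HS]] [Hsat Hspl].
split.
- split; [exact: CA_fwd HP HS Hsat Hspl|exact: CA_bwd HP HS Hsat Hspl].
- split; [exact: RIDF_fwd HP HS Hsat Hspl|exact: RIDF_bwd HP HS Hsat Hspl].
- rewrite !UFFD_BF; split; [exact: BF_fwd HP HS Hsat Hspl|exact: BF_bwd HP HS Hsat Hspl].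
Qed.
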